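(* Every semicommutative ring is almost Armendariz.
   Context: All rings are associative with identity. A ring $R$ is semicommutative if for all $a,b\in R$, $ab=0$ implies $aRb=0$. For a ring $R$, $P(R)$ denotes the prime radical of $R$ (the intersection of all prime ideals of $R$, equivalently the set of strongly nilpotent elements of $R$). A ring $R$ is called almost Armendariz if whenever $f(x)=\sum_{i=0}^m a_ix^i$ and $g(x)=\sum_{j=0}^n b_jx^j\in R[x]$ satisfy $f(x)g(x)=0$, then $a_ib_j\in P(R)$ for all $0\le i\le m$, $0\le j\le n$. *)

(* Defs.v *)
From HB Require Import structures.
From mathcomp Require Import all_boot all_order all_algebra.
Set Implicit Arguments. Unset Strict Implicit. Unset Printing Implicit Defensive.
Import GRing.Theory.
Local Open Scope ring_scope.

Definition semicommutative (R : nzRingType) : Prop :=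
  forall a b : R, a * b = 0 -> forall r : R, a * r * b = 0.

Definition is_ideal (R : nzRingType) (I : R -> Prop) : Prop :=
  [/\ I 0,
      (forall x y, I x -> I y -> I (x - y)),
      (forall r x, I x -> I (r * x)) &
      (forall r x, I x -> I (x * r))].

(* Prime ideal (noncommutative sense): a proper two-sided ideal P such that
   for all ideals A, B with AB ⊆ P, A ⊆ P or B ⊆ P.  (AB ⊆ P iff all
   products ab, a ∈ A, b ∈ B, lie in P.) *)
Definition is_prime_ideal (R : nzRingType) (P : R -> Prop) : Prop :=
  [/\ is_ideal P,
      ~ P 1 &
      (forall A B : R -> Prop, is_ideal A -> is_ideal B ->
         (forall a b, A a -> B b -> P (a * b)) ->
         (forall a, A a -> P a) \/ (forall b, B b -> P b))].

Definition prime_radical (R : nzRingType) (x : R) : Prop :=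
  forall P : R -> Prop, is_prime_ideal P -> P x.

Definition almost_armendariz (R : nzRingType) : Prop :=
  forall f g : {poly R}, f * g = 0 ->
    forall i j : nat, (i < size f)%N -> (j < size g)%N ->
      prime_radical (f`_i * g`_j).

(* Main.v *)
Require Import Defs.
From mathcomp Require Import all_boot all_order all_algebra zify.
From Stdlib Require Import Classical.
Set Implicit Arguments. Unset Strict Implicit. Unset Printing Implicit Defensive.
Import GRing.Theory.
Local Open Scope ring_scope.

Lemma primeL (R : nzRingType) (P : R -> Prop) : is_prime_ideal P ->
  forall u v : R, (forall r, P (u * r * v)) -> P u \/ P v.
Proof.
case=> [[P0 PB PL PR] P1 Ppr] u v Huv.
pose A := fun z : R => forall r, P (z * r * v).
pose B := fun w : R => forall z, A z -> forall r, P (z * r * w).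
have iA : is_ideal A.
  split.
  - by move=> r; rewrite !mul0r.
  - by move=> x y Hx Hy r; rewrite !mulrBl; apply: PB.
  - by move=> t x Hx r; rewrite -!mulrA; apply: PL; rewrite !mulrA.
  - by move=> t x Hx r; rewrite -(mulrA x t r); apply: Hx.
have iB : is_ideal B.
  split.
  - by move=> z _ r; rewrite mulr0.
  - by move=> x y Hx Hy z Hz r; rewrite mulrBr; apply: PB; [apply: Hx|apply: Hy].
  - by move=> t x Hx z Hz r; rewrite mulrA -(mulrA z r t); apply: Hx.
  - by move=> t x Hx z Hz r; rewrite mulrA; apply: PR; apply: Hx.
have AB : forall a b, A a -> B b -> P (a * b).
  by move=> a b Ha Hb; have := Hb a Ha 1; rewrite mulr1.
case: (Ppr A B iA iB AB) => H.
- by left; apply: H.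
- by right; apply: H => z Hz r; apply: Hz.
Qed.

Lemma nil_prime (R : nzRingType) (P : R -> Prop) : semicommutative R ->
  is_prime_ideal P -> forall (x : R) n, x ^+ n = 0 -> P x.
Proof.
move=> hs hP x n Hx.
have S : forall j, P x \/ (forall z, z * x ^+ j = 0 -> P z).
  elim=> [|j IH].
    right=> z; rewrite expr0 mulr1 => ->.
    by case: hP => [[]].
  case: IH => [Px|IH]; first by left.
  case: (classic (P x)) => Px; first by left.
  right=> z Hz.
  have : forall r, P (z * r * x).
    move=> r; apply: IH.
    by rewrite -mulrA -exprS; apply: hs.
  by move/(primeL hP) => [//|//].
case: (S n) => [//|H].
have := H 1; rewrite mul1r => /(_ Hx).
by case: hP.
Qed.
Lemma D_succ (R : nzRingType) (e z : R) N k :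
  z * e ^+ (N - k) = 0 -> (z * e) * e ^+ (N - k.+1) = 0.
Proof.
move=> H; case: (ltnP k N) => hk.
  by rewrite -mulrA -exprS subnSK.
move: H; rewrite (_ : (N - k)%N = 0%N); last by apply/eqP; rewrite subn_eq0.
by rewrite expr0 mulr1 => ->; rewrite !mul0r.
Qed.

Lemma nil_add (R : nzRingType) : semicommutative R -> forall (x y : R) n m,
  x ^+ n = 0 -> y ^+ m = 0 -> (x + y) ^+ (n + m) = 0.
Proof.
move=> hs x y n m Hx Hy.
have C : forall j, exists h : nat -> R, (x + y) ^+ j = \sum_(k < j.+1) h k /\
   forall k, (k <= j)%N -> h k * x ^+ (n - k) = 0 /\ h k * y ^+ (m - (j - k)) = 0.
  elim=> [|j [h [Hs Hh]]].
    exists (fun _ => 1); split; first by rewrite big_ord1 expr0.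
    by move=> k; rewrite leqn0 => /eqP ->; rewrite !subn0 !mul1r.
  exists (fun k => (if k is k'.+1 then h k' * x else 0) + (if (k <= j)%N then h k * y else 0)).
  split.
    rewrite exprSr Hs mulrDr !mulr_suml big_split /=.
    rewrite [X in _ = X + _]big_ord_recl [X in _ = _ + X]big_ord_recr /=.
    rewrite ltnn add0r addr0; congr (_ + _).
      by apply: eq_bigr => i _; rewrite -ltnS ltn_ord.
  move=> k hk; rewrite !mulrDl; split.
    have -> : (if k is k'.+1 then h k' * x else 0) * x ^+ (n - k) = 0.
      case: k hk => [|k] hk; first by rewrite mul0r.
      by apply: D_succ; case: (Hh k hk).
    have -> : (if (k <= j)%N then h k * y else 0) * x ^+ (n - k) = 0.
      case: ifP => hkj; last by rewrite mul0r.
      by apply: hs; case: (Hh k hkj).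
    by rewrite addr0.
  have -> : (if k is k'.+1 then h k' * x else 0) * y ^+ (m - (j.+1 - k)) = 0.
    case: k hk => [|k] hk; first by rewrite mul0r.
    by rewrite subSS; apply: hs; case: (Hh k hk).
  have -> : (if (k <= j)%N then h k * y else 0) * y ^+ (m - (j.+1 - k)) = 0.
    case: ifP => hkj; last by rewrite mul0r.
    by rewrite subSn //; apply: D_succ; case: (Hh k hkj).
  by rewrite addr0.
have [h [Hs Hh]] := C (n + m)%N.
rewrite Hs big1 // => k _.
have hk : (k <= n + m)%N by rewrite -ltnS ltn_ord.
case: (Hh k hk) => H1 H2.
case: (leqP n k) => hnk.
  by move: H1; rewrite (_ : (n - k)%N = 0%N) ?expr0 ?mulr1 //; apply/eqP; rewrite subn_eq0.
move: H2; rewrite (_ : (m - (n + m - k))%N = 0%N) ?expr0 ?mulr1 //.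
apply/eqP; rewrite subn_eq0; lia.
Qed.
Lemma armA (R : nzRingType) (I : R -> Prop) :
 I 0 -> (forall x y, I x -> I y -> I (x - y)) -> (forall z r, I z -> I (z * r)) ->
 (forall u v r, I (u * v) -> I (u * r * v)) -> (forall x, I (x * x) -> I x) ->
 forall f g : {poly R}, (forall k, I ((f * g)`_k)) -> forall i j, I (f`_i * g`_j).
Proof.
move=> I0 IB IR IM IS.
have IA : forall x y, I x -> I y -> I (x + y).
  move=> x y Hx Hy; rewrite (_ : x + y = x - (0 - y)); last by rewrite sub0r opprK.
  by apply: (IB) => //; apply: (IB).
move=> f g; move: {2}(size g) (leqnn (size g)) => N.
elim: N g => [|N IH] g hg Hfg i j.
  by move: hg; rewrite leqn0 size_poly_eq0 => /eqP ->; rewrite coef0 mulr0.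
case: (leqP (size g) N) => hgN; first by apply: IH.
have hsz : size g = N.+1 by apply/eqP; rewrite eqn_leq hg hgN.
set b := g`_N.
have gz : forall j, (N < j)%N -> g`_j = 0.
  by move=> j' hj; apply: nth_default; rewrite hsz.
have C1 : forall i, I (f`_i * b).
  suff H : forall k i, (size f <= i + k)%N -> I (f`_i * b).
    by move=> i0; apply: (H (size f)); rewrite leq_addl.
  elim=> [|k IHk] i0 hi.
    by rewrite nth_default ?mul0r // -(addn0 i0).
  have Hc : I ((f * g)`_(i0 + N) * b) by apply: (IR).
  have hi0 : (i0 < (i0 + N).+1)%N by rewrite ltnS leq_addr.
  move: Hc; rewrite coefM mulr_suml (bigD1 (Ordinal hi0)) //= addKn.
  set rest := \sum_(l < _ | _) _.
  have Hr : I rest.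
    apply: big_ind => //.
    move=> l hl; have hl' : nat_of_ord l != i0 by [].
    case: (ltnP (nat_of_ord l) i0) => hli.
      by rewrite gz ?mulr0 ?mul0r //; lia.
    apply: (IM); apply: IHk.
    have : (i0 < l)%N by rewrite ltn_neqAle eq_sym hl' hli.
    lia.
  move=> Ht.
  have Ht' : I (f`_i0 * b * b).
    rewrite (_ : f`_i0 * b * b = (f`_i0 * g`_N * b + rest) - rest); last by rewrite addrK.
    by apply: (IB).
  by apply: (IS); rewrite mulrA; apply: (IM).
pose g' := g - b%:P * 'X^N.
have cg' : forall j, g'`_j = g`_j - b * (j == N)%:R.
  by move=> j'; rewrite coefB coefCM coefXn.
have sg' : (size g' <= N)%N.
  apply/leq_sizeP => j' hj'; rewrite cg'.
  case: (ltngtP N j') hj' => // hj' _.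
    by rewrite gz // mulr0 subr0.
  by rewrite mulr1 -hj' subrr.
have Hfg' : forall k, I ((f * g')`_k).
  move=> k; rewrite /g' mulrBr mulrA coefB coefMXn.
  case: ifP => _; first by rewrite subr0.
  by rewrite coefMC; apply: (IB).
have := IH g' sg' Hfg' i j; rewrite cg'.
case: (ltngtP j N) => hj.
- by rewrite mulr0 subr0.
- by move=> _; rewrite gz // mulr0; apply: (I0).
- by rewrite hj; move=> _; apply: (C1).
Qed.

Lemma swapX (R : nzRingType) (a b : R) k :
  (a * b) ^+ k.+1 = a * (b * a) ^+ k * b.
Proof.
elim: k => [|k IH]; first by rewrite expr1 expr0 mulr1.
by rewrite exprS IH exprS !mulrA.
Qed.

Lemma nil_mulr (R : nzRingType) : semicommutative R -> forall (z r : R) n,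
  z ^+ n = 0 -> (z * r) ^+ n = 0.
Proof.
move=> hs z r n Hz.
suff H : forall k, (k <= n)%N -> (z * r) ^+ k * z ^+ (n - k) = 0.
  by have := H n (leqnn n); rewrite subnn expr0 mulr1.
elim=> [|k IH] hk; first by rewrite expr0 mul1r subn0.
have := IH (ltnW hk); rewrite -(subnSK hk) exprS mulrA => /hs /(_ r).
by rewrite exprSr !mulrA.
Qed.

Definition nilp (R : nzRingType) (x : R) := exists n, x ^+ n = 0.

Theorem proposition2p8 (R : nzRingType) :
  semicommutative R -> almost_armendariz R.
Proof.
move=> hs f g Hfg i j _ _ P hP.
suff [n Hn] : nilp (f`_i * g`_j) by apply: (nil_prime hs hP Hn).
apply: (@armA R (@nilp R)).
- by exists 1%N; rewrite expr1.
- move=> x y [n Hx] [m Hy]; exists (n + m)%N; apply: nil_add => //.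
  by rewrite exprNn Hy mulr0.
- by move=> z r [n Hz]; exists n; apply: nil_mulr.
- move=> u v r [n Huv]; exists (n.+1 + 1)%N.
  have H1 : (v * u) ^+ n.+1 = 0 by rewrite swapX Huv mulr0 mul0r.
  have H2 : (v * u * r) ^+ n.+1 = 0 by apply: nil_mulr.
  by rewrite addn1 swapX (mulrA v u r) H2 mulr0 mul0r.
- by move=> x [n Hx]; exists (2 * n)%N; rewrite exprM expr2.
- by move=> k; rewrite Hfg coef0; exists 1%N; rewrite expr1.
Qed.
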